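(* For any sequence $\{z_k\}_{k\ge1}$ of complex numbers, for Lebesgue-almost every $r\in(0,\infty)$ we have $\liminf_{n\to\infty}\left(\inf_{|z|=r}|z-z_n|\right)^{1/n}\ge1$. *)

(* Defs.v *)
From Stdlib Require Import Reals Lra.
Open Scope R_scope.

Definition Cplx : Type := (R * R)%type.
Definition Cmod (z : Cplx) : R := sqrt (fst z * fst z + snd z * snd z).
Definition Csub (z w : Cplx) : Cplx := (fst z - fst w, snd z - snd w).

Definition is_inf (S : R -> Prop) (m : R) : Prop :=
  (forall x, S x -> m <= x) /\ (forall l, (forall x, S x -> l <= x) -> l <= m).

Definition circle_dists (r : R) (w : Cplx) (x : R) : Prop :=
  exists z : Cplx, Cmod z = r /\ x = Cmod (Csub z w).

(* x^(1/n) for x >= 0 and n >= 1 (with 0^(1/n) = 0). *)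
Definition nroot (x : R) (n : nat) : R :=
  if Req_EM_T x 0 then 0 else Rpower x (/ INR n).

(* liminf_{n -> oo} u n >= 1, unfolded: for every eps > 0, eventually u n >= 1 - eps.
   (Sequences are indexed from 1.) *)
Definition liminf_ge1 (u : nat -> R) : Prop :=
  forall eps, eps > 0 -> exists N : nat, forall n : nat,
    (1 <= n)%nat -> (N <= n)%nat -> u n >= 1 - eps.

Definition lebesgue_null (E : R -> Prop) : Prop :=
  forall eps, eps > 0 -> exists a b : nat -> R,
    (forall k, a k <= b k) /\
    (forall x, E x -> exists k, a k < x < b k) /\
    (forall N, sum_f_R0 (fun k => b k - a k) N <= eps).

(* Main.v *)
Require Import Defs.
From Stdlib Require Import Reals Lra Lia Classical FunctionalExtensionality.
Open Scope R_scope.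

Lemma Cmod_ge0 w : 0 <= Cmod w.
Proof. unfold Cmod; apply sqrt_pos. Qed.

Lemma Cmod_sq w : Cmod w * Cmod w = fst w * fst w + snd w * snd w.
Proof. unfold Cmod; apply sqrt_sqrt; nra. Qed.

Lemma dist_lower r w z : Cmod z = r -> Rabs (r - Cmod w) <= Cmod (Csub z w).
Proof.
  intros Hz.
  pose proof (Cmod_sq z) as Hzs. pose proof (Cmod_sq w) as Hws.
  pose proof (Cmod_ge0 z). pose proof (Cmod_ge0 w).
  rewrite <- sqrt_Rsqr_abs. unfold Cmod at 2. apply sqrt_le_1_alt.
  destruct z as [z1 z2], w as [w1 w2]; simpl in *. unfold Rsqr.
  set (m := Cmod (w1, w2)) in *. subst r.
  set (r := Cmod (z1, z2)) in *.
  assert (z1*w1 + z2*w2 <= r*m).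
  { assert ((z1*w1+z2*w2)*(z1*w1+z2*w2) <= (r*m)*(r*m)).
    { replace ((r*m)*(r*m)) with ((r*r)*(m*m)) by ring. rewrite Hzs, Hws.
      pose proof (Rle_0_sqr (z1*w2 - z2*w1)). unfold Rsqr in *. nra. }
    assert (0 <= r*m) by (apply Rmult_le_pos; auto).
    destruct (Rle_lt_dec (z1*w1 + z2*w2) (r*m)); auto. nra. }
  nra.
Qed.

Lemma dist_attained r w : 0 < r -> circle_dists r w (Rabs (r - Cmod w)).
Proof.
  intros Hr. pose proof (Cmod_sq w) as Hws. pose proof (Cmod_ge0 w).
  destruct w as [w1 w2]; simpl in *. set (m := Cmod (w1, w2)) in *.
  destruct (Req_dec m 0) as [H0|H0].
  - assert (w1 = 0) by nra. assert (w2 = 0) by nra. subst.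
    exists (r, 0). unfold Cmod, Csub; simpl. split.
    + replace (r*r+0*0) with (Rsqr r) by (unfold Rsqr; ring).
      rewrite sqrt_Rsqr_abs. rewrite Rabs_right; lra.
    + rewrite H0. replace ((r-0)*(r-0)+(0-0)*(0-0)) with (Rsqr (r-0)) by (unfold Rsqr; ring).
      rewrite sqrt_Rsqr_abs; reflexivity.
  - exists (r/m*w1, r/m*w2). unfold Cmod, Csub; simpl. split.
    + replace (r/m*w1*(r/m*w1)+r/m*w2*(r/m*w2)) with (Rsqr r).
      * rewrite sqrt_Rsqr_abs. rewrite Rabs_right; lra.
      * unfold Rsqr. replace (r/m*w1*(r/m*w1)+r/m*w2*(r/m*w2)) with
          ((r/m)*(r/m)*(w1*w1+w2*w2)) by ring. rewrite <- Hws. field. auto.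
    + replace ((r/m*w1-w1)*(r/m*w1-w1)+(r/m*w2-w2)*(r/m*w2-w2)) with (Rsqr (r-m)).
      * rewrite sqrt_Rsqr_abs. reflexivity.
      * unfold Rsqr. replace ((r/m*w1-w1)*(r/m*w1-w1)+(r/m*w2-w2)*(r/m*w2-w2)) with
          ((r/m-1)*(r/m-1)*(w1*w1+w2*w2)) by ring. rewrite <- Hws. field. auto.
Qed.

Lemma dist_inf r w : 0 < r -> is_inf (circle_dists r w) (Rabs (r - Cmod w)).
Proof.
  intros Hr. split.
  - intros x [z [Hz ->]]. apply dist_lower; auto.
  - intros l Hl. apply Hl. apply dist_attained; auto.
Qed.

Lemma sum_rho eps N :
  sum_f_R0 (fun k => 2 * (eps / (2 * (INR k + 1) * (INR k + 2)))) N = eps - eps / (INR N + 2).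
Proof.
  induction N as [|N IH].
  - simpl. field.
  - change (sum_f_R0 (fun k => 2 * (eps / (2 * (INR k + 1) * (INR k + 2)))) (S N)) with
      (sum_f_R0 (fun k => 2 * (eps / (2 * (INR k + 1) * (INR k + 2)))) N +
       2 * (eps / (2 * (INR (S N) + 1) * (INR (S N) + 2)))).
    rewrite IH. rewrite S_INR. pose proof (pos_INR N).
    field. split; lra.
Qed.

Lemma small_pow a eps : 0 < a -> 0 < eps -> exists N : nat, forall n : nat,
  (1 <= n)%nat -> (N <= n)%nat ->
  exp (- (INR n * a)) < eps / (2 * (INR n + 1) * (INR n + 2)).
Proof.
  intros Ha He.
  set (b := a / 3).
  assert (Hb : 0 < b) by (unfold b; lra).
  destruct (archimed_cor1 (b*b*b*eps/12)) as [N [HN HN0]].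
  { apply Rmult_lt_0_compat; [|lra]. repeat apply Rmult_lt_0_compat; lra. }
  exists N. intros n H1 HNn.
  assert (HnN : INR N <= INR n) by (apply le_INR; auto).
  assert (HN1 : 0 < INR N) by (apply lt_0_INR; auto).
  assert (Hn1 : 1 <= INR n) by (apply (le_INR 1); auto).
  assert (Hx : 12 <= INR n * (b*b*b*eps)).
  { set (c := b*b*b*eps) in *.
    assert (Hc : 0 < c) by (unfold c; repeat apply Rmult_lt_0_compat; lra).
    assert (1 < c/12 * INR N).
    { replace 1 with (/ INR N * INR N) by (field; lra).
      apply Rmult_lt_compat_r; lra. }
    nra. }
  set (x := INR n) in *.
  assert (Hexp : exp (x*a) = exp (x*b) * exp (x*b) * exp (x*b)).
  { rewrite <- !exp_plus. f_equal. unfold b. field. }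
  assert (Hg : x * b < exp (x*b)).
  { pose proof (exp_ineq1 (x*b)). assert (x*b <> 0) by nra. specialize (H H0). lra. }
  assert (Hpos : 0 < x*b) by nra.
  assert (Hbig : 2*(x+1)*(x+2) / eps < exp (x*a)).
  { rewrite Hexp.
    assert (x*b*(x*b)*(x*b) < exp (x*b) * exp (x*b) * exp (x*b)).
    { set (u := x*b) in *. set (v := exp u) in *.
      assert (u*u < v*v) by nra. nra. }
    apply Rle_lt_trans with (x*b*(x*b)*(x*b)); [|lra].
    apply (Rmult_le_reg_r eps); [lra|]. unfold Rdiv. rewrite Rmult_assoc, Rinv_l by lra.
    rewrite Rmult_1_r. nra. }
  rewrite exp_Ropp.
  assert (0 < 2*(x+1)*(x+2)) by nra.
  apply (Rmult_lt_reg_r (exp (x*a) * (2*(x+1)*(x+2)) / eps)).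
  { pose proof (exp_pos (x*a)). apply Rmult_lt_0_compat; [|apply Rinv_0_lt_compat; lra]. nra. }
  pose proof (exp_pos (x*a)).
  replace (/ exp (x * a) * (exp (x * a) * (2 * (x + 1) * (x + 2)) / eps)) with
    (2 * (x + 1) * (x + 2) / eps) by (field; lra).
  replace (eps / (2 * (x + 1) * (x + 2)) * (exp (x * a) * (2 * (x + 1) * (x + 2)) / eps))
    with (exp (x*a)) by (field; lra).
  exact Hbig.
Qed.

Theorem mainTheorem10 (z : nat -> Cplx) :
  lebesgue_null (fun r => 0 < r /\
    ~ (forall d : nat -> R,
         (forall n, is_inf (circle_dists r (z n)) (d n)) ->
         liminf_ge1 (fun n => nroot (d n) n))).
Proof.
  intros eps Heps.
  set (rho := fun k : nat => eps / (2 * (INR k + 1) * (INR k + 2))).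
  assert (Hrho : forall k, 0 < rho k).
  { intro k. unfold rho. pose proof (pos_INR k).
    apply Rmult_lt_0_compat; [lra|]. apply Rinv_0_lt_compat. nra. }
  exists (fun k => Cmod (z k) - rho k), (fun k => Cmod (z k) + rho k).
  split; [intro k; pose proof (Hrho k); lra|]. split.
  - intros r [Hr Hnot].
    assert (Hnl : ~ liminf_ge1 (fun n => nroot (Rabs (r - Cmod (z n))) n)).
    { intro H. apply Hnot. intros d Hd.
      assert (Hdd : forall n, d n = Rabs (r - Cmod (z n))).
      { intro n. destruct (Hd n) as [Hd1 Hd2]. destruct (dist_inf r (z n) Hr) as [Hi1 Hi2].
        apply Rle_antisym; [apply Hi2; auto | apply Hd2; auto]. }
      intros e He. destruct (H e He) as [N HN]. exists N. intros n h1 h2.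
      rewrite Hdd. apply HN; auto. }
    unfold liminf_ge1 in Hnl.
    apply not_all_ex_not in Hnl. destruct Hnl as [e' He'].
    apply imply_to_and in He'. destruct He' as [He'0 He'].
    assert (HA : forall N : nat, exists n, (1 <= n)%nat /\ (N <= n)%nat /\
                  nroot (Rabs (r - Cmod (z n))) n < 1 - e').
    { intro N. apply NNPP. intro HH. apply He'. exists N. intros n h1 h2.
      apply Rnot_lt_ge. intro hl. apply HH. exists n. auto. }
    assert (Hnn : forall n, 0 <= nroot (Rabs (r - Cmod (z n))) n).
    { intro n. unfold nroot. destruct Req_EM_T; [lra|]. unfold Rpower.
      pose proof (exp_pos (/ INR n * ln (Rabs (r - Cmod (z n))))); lra. }
    assert (He1 : e' < 1).
    { destruct (HA 0%nat) as [n [_ [_ Hl]]]. pose proof (Hnn n). lra. }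
    set (q := 1 - e').
    assert (Hlq : ln q < 0).
    { rewrite <- ln_1. apply ln_increasing; unfold q; lra. }
    destruct (small_pow (- ln q) eps) as [N HN]; [lra|lra|].
    destruct (HA N) as [n [h1 [h2 Hl]]]. fold q in Hl.
    exists n.
    assert (Hdn : Rabs (r - Cmod (z n)) < rho n).
    { unfold nroot in Hl. destruct Req_EM_T as [E|E].
      - rewrite E. apply Hrho.
      - unfold Rpower in Hl.
        set (D := Rabs (r - Cmod (z n))) in *.
        assert (HD : 0 < D) by (pose proof (Rabs_pos (r - Cmod (z n))); unfold D in *; lra).
        assert (Hn : 0 < INR n) by (apply lt_0_INR; lia).
        assert (H1 : / INR n * ln D < ln q).
        { rewrite <- (ln_exp (/ INR n * ln D)). apply ln_increasing; [apply exp_pos|auto]. }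
        assert (H2 : ln D < INR n * ln q).
        { apply (Rmult_lt_reg_l (/ INR n)); [apply Rinv_0_lt_compat; lra|].
          replace (/ INR n * (INR n * ln q)) with (ln q) by (field; lra). auto. }
        rewrite <- (exp_ln D HD).
        apply Rlt_trans with (exp (- (INR n * - ln q))).
        + apply exp_increasing. lra.
        + apply HN; auto. }
    apply Rabs_def2 in Hdn. lra.
  - intro N. replace (fun k => Cmod (z k) + rho k - (Cmod (z k) - rho k))
      with (fun k => 2 * (eps / (2 * (INR k + 1) * (INR k + 2)))).
    + rewrite sum_rho. pose proof (pos_INR N).
      assert (0 < eps / (INR N + 2)) by (apply Rmult_lt_0_compat; [lra|apply Rinv_0_lt_compat; lra]).
      lra.
    + apply functional_extensionality. intro k. unfold rho. ring.
Qed.
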